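(* Let $n\ge 2$ be an integer and $k$ an integer with $1\le k\le 2^n$. Then $$v_2\big(s(2^n,k+1)\big)>v_2\big(s(2^n,k)\big)-n.$$
   Context: The (unsigned) Stirling numbers of the first kind $s(n,k)$ are defined by $x(x+1)\cdots(x+n-1)=\sum_{k=0}^n s(n,k)x^k$, with $s(n,k)=0$ for $k>n$. $v_2$ denotes the $2$-adic valuation, with the convention $v_2(0)=+\infty$. *)

(* Defs.v *)
From mathcomp Require Import all_boot all_order all_algebra.
Set Implicit Arguments. Unset Strict Implicit. Unset Printing Implicit Defensive.
Import GRing.Theory.
Local Open Scope ring_scope.

Definition rising_poly (n : nat) : {poly int} :=
  \prod_(i < n) ('X + (i%:R)%:P).

(* unsigned Stirling numbers of the first kind: coefficient of x^k
   (automatically 0 for k > n since the polynomial has degree n) *)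
Definition stirling1 (n k : nat) : int := (rising_poly n)`_k.

(* 2-adic valuation with v2(0) = +oo, encoded as None *)
Definition v2 (z : int) : option nat :=
  if z == 0 then None else Some (logn 2 `|z|%N).

(* the strict inequality  a > b - n  in N ∪ {+oo}  (with +oo - n = +oo) *)
Definition v_gt_minus (a b : option nat) (n : nat) : Prop :=
  match a, b with
  | None, _ => True
  | Some _, None => False
  | Some x, Some y => (Posz y - Posz n < Posz x)%R
  end.

(* Main.v *)
Require Import Defs.
From mathcomp Require Import all_boot all_order all_algebra.
From mathcomp Require Import zify ring.

Module MP1.
Set Implicit Arguments. Unset Strict Implicit. Unset Printing Implicit Defensive.
Import GRing.Theory Num.Theory.
Local Open Scope ring_scope.

Definition vz (z : int) : nat := logn 2 `|z|.

Lemma dvd2vz (z : int) e : z != 0 -> ((2 ^ e)%N%:Z %| z)%Z = (e <= vz z)%N.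
Proof.
move=> nz; rewrite dvdzE absz_nat /vz pfactor_dvdn //.
by rewrite absz_gt0.
Qed.

Lemma vz_dvd (z : int) : ((2 ^ vz z)%N%:Z %| z)%Z.
Proof.
have [->|nz] := eqVneq z 0; first exact: dvdz0.
by rewrite dvd2vz.
Qed.

Lemma vzM (x y : int) : x != 0 -> y != 0 -> vz (x * y) = (vz x + vz y)%N.
Proof.
move=> nx ny; rewrite /vz abszM lognM // absz_gt0 //.
Qed.

Lemma vzN (x : int) : vz (- x) = vz x.
Proof. by rewrite /vz abszN. Qed.

Lemma vz2 e : vz (2 ^ e)%N%:Z = e.
Proof. by rewrite /vz absz_nat pfactorK. Qed.

Lemma vz_dom (x y : int) : x != 0 -> ((2 ^ (vz x).+1)%N%:Z %| y)%Z ->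
  x + y != 0 /\ vz (x + y) = vz x.
Proof.
move=> nx hy.
have nd : ~~ ((2 ^ (vz x).+1)%N%:Z %| x)%Z by rewrite dvd2vz // ltnn.
have hxy : ((2 ^ (vz x).+1)%N%:Z %| x + y)%Z = false.
  apply/negP => h; move/negP: nd; apply.
  by have := rpredB h hy; rewrite addrK.
have nz : x + y != 0 by apply/eqP => e; move: hxy; rewrite e dvdz0.
split => //.
have h1 : ((2 ^ vz x)%N%:Z %| x + y)%Z.
  apply: rpredD; first exact: vz_dvd.
  apply: dvdz_trans hy; rewrite expnS PoszM; exact: dvdz_mull.
move: h1 hxy; rewrite !dvd2vz // => h1 h2.
apply/eqP; rewrite eqn_leq h1 andbT; rewrite leqNgt; by move: h2; rewrite ltnNge => ->.
Qed.

Lemma dvdz_sumP (d : int) n (F : nat -> int) :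
  (forall i, (i < n)%N -> (d %| F i)%Z) -> (d %| \sum_(i < n) F i)%Z.
Proof. by move=> h; apply: rpred_sum => i _; apply: h. Qed.

Lemma dvd2_le e e' (z : int) : (e <= e')%N -> ((2 ^ e')%N%:Z %| z)%Z -> ((2 ^ e)%N%:Z %| z)%Z.
Proof.
move=> le h; apply: dvdz_trans h; rewrite dvdzE !absz_nat; exact: dvdn_exp2l.
Qed.

Lemma dvd2M e1 e2 (x y : int) : ((2 ^ e1)%N%:Z %| x)%Z -> ((2 ^ e2)%N%:Z %| y)%Z ->
  ((2 ^ (e1 + e2))%N%:Z %| x * y)%Z.
Proof. by move=> h1 h2; rewrite expnD PoszM; apply: dvdz_mul. Qed.

Lemma dvd_vzM (x y : int) e : (e <= vz x + vz y)%N -> ((2 ^ e)%N%:Z %| x * y)%Z.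
Proof.
move=> le; apply: (dvd2_le le); apply: dvd2M; exact: vz_dvd.
Qed.

Lemma pow2z e : ((2 ^ e)%N%:Z = 2 ^+ e :> int).
Proof. by rewrite -natz natrX. Qed.

Lemma dvd2vz' (z : int) e : z != 0 -> (2 ^+ e %| z)%Z = (e <= vz z)%N.
Proof. by rewrite -pow2z; apply: dvd2vz. Qed.

Lemma vz_dvd' (z : int) : (2 ^+ vz z %| z)%Z.
Proof. by rewrite -pow2z; apply: vz_dvd. Qed.

Lemma vz_dom' (x y : int) : x != 0 -> (2 ^+ (vz x).+1 %| y)%Z ->
  x + y != 0 /\ vz (x + y) = vz x.
Proof. by rewrite -pow2z; apply: vz_dom. Qed.

Lemma vz_nat n : vz n%:Z = logn 2 n.
Proof. by rewrite /vz absz_nat. Qed.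

Lemma dvd2_le' e e' (z : int) : (e <= e')%N -> (2 ^+ e' %| z)%Z -> (2 ^+ e %| z)%Z.
Proof. by rewrite -!pow2z; apply: dvd2_le. Qed.

End MP1.
Import MP1.

Module MP2.
Set Implicit Arguments. Unset Strict Implicit. Unset Printing Implicit Defensive.

Lemma logn_lt k a : 0 < k -> k < 2 ^ a -> logn 2 k < a.
Proof.
move=> k0 ka; rewrite -(@ltn_exp2l 2) //.
apply: leq_ltn_trans ka; apply: dvdn_leq => //; exact: pfactor_dvdnn.
Qed.

Lemma logn_le_self k : logn 2 k <= k.
Proof.
case: k => // k.
have := @logn_lt k.+1 k.+1 isT (ltn_expl _ (isT : 1 < 2)).
by move/ltnW.
Qed.

Lemma bin_pow2_even a k : 0 < k -> k < 2 ^ a -> ~~ odd 'C(2 ^ a, k).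
Proof.
move=> k0 ka; apply/negP => hodd.
case: k k0 ka hodd => // k _ ka hodd.
have e := mul_bin_diag (2 ^ a) k.
have h1 : logn 2 (k.+1 * 'C(2 ^ a, k.+1)) = logn 2 k.+1.
  by rewrite mulnC logn_Gauss // coprime2n.
have h2 : a <= logn 2 (2 ^ a * 'C((2 ^ a).-1, k)).
  rewrite -pfactor_dvdn //; first exact: dvdn_mulr.
  rewrite muln_gt0 expn_gt0 /= bin_gt0 -ltnS prednK ?expn_gt0 //; exact: ltnW.
move: h2; rewrite e h1 => h2.
have := logn_lt (isT : 0 < k.+1) ka; by rewrite ltnNge h2.
Qed.

Lemma bin_pow2m1_odd a k : k < 2 ^ a -> odd 'C((2 ^ a).-1, k).
Proof.
elim: k => [|k IH] ka; first by rewrite bin0.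
have := bin_pow2_even (isT : 0 < k.+1) ka.
have hp : 2 ^ a = ((2 ^ a).-1).+1 by rewrite prednK // expn_gt0.
rewrite {1}hp binS oddD => h.
have := IH (ltnW ka); move: h; by case: (odd _); case: (odd _).
Qed.

Lemma logn_bin_pow2 a j : 0 < j -> j <= 2 ^ a -> logn 2 'C(2 ^ a, j) + logn 2 j = a.
Proof.
case: j => // k _ ka.
have e := mul_bin_diag (2 ^ a) k.
have hC : 0 < 'C(2 ^ a, k.+1) by rewrite bin_gt0.
have : logn 2 (k.+1 * 'C(2 ^ a, k.+1)) = a.
  rewrite -e mulnC logn_Gauss; last by rewrite coprime2n bin_pow2m1_odd.
  by rewrite pfactorK.
by rewrite lognM // addnC.
Qed.

Lemma logn_bin_pow2_le a j : logn 2 'C(2 ^ a, j) <= a.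
Proof.
case: j => [|j]; first by rewrite bin0 logn1.
case: (leqP j.+1 (2 ^ a)) => h; first by have := logn_bin_pow2 (isT : 0 < j.+1) h; lia.
by rewrite bin_small.
Qed.

Lemma logn_bin_pow2_0 a : logn 2 'C(2 ^ a, 0) = 0.
Proof. by rewrite bin0 logn1. Qed.

Lemma logn_bin_pow2_top a : logn 2 'C(2 ^ a, 2 ^ a) = 0.
Proof. by rewrite binn logn1. Qed.

Lemma logn_min x y : 0 < x -> 0 < y ->
  logn 2 (x + y) <= logn 2 x \/ logn 2 y <= logn 2 x.
Proof.
move=> x0 y0.
case: (leqP (logn 2 (x + y)) (logn 2 y)) => h.
- left. rewrite -pfactor_dvdn //.
  have h1 : 2 ^ logn 2 (x + y) %| x + y by apply: pfactor_dvdnn.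
  have h2 : 2 ^ logn 2 (x + y) %| y.
    apply: dvdn_trans (pfactor_dvdnn 2 y); exact: dvdn_exp2l.
  by rewrite -(dvdn_addl _ h2).
- right. rewrite -pfactor_dvdn //.
  have h1 : 2 ^ logn 2 y %| x + y.
    apply: dvdn_trans (pfactor_dvdnn 2 (x + y)); apply: dvdn_exp2l; exact: ltnW.
  by rewrite -(dvdn_addl _ (pfactor_dvdnn 2 y)).
Qed.

End MP2.
Import MP2.

Module MP3.
Set Implicit Arguments. Unset Strict Implicit. Unset Printing Implicit Defensive.

Definition Dg c := (2 ^ c).-1.
Definition psi c j := logn 2 'C(2 ^ c, j).

Fixpoint phi c t : nat :=
  match c with
  | 0 => 0
  | c'.+1 => if t <= Dg c' then phi c' t
             else phi c' (Dg c') + 2 * c'.+1 * (t - Dg c') + psi c' (t - Dg c')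
  end.

Lemma pow_facts c : 0 < 2 ^ c /\ c < 2 ^ c /\ 2 ^ c.+1 = 2 * 2 ^ c.
Proof. split; [exact: expn_gt0 | split; [exact: ltn_expl | by rewrite expnS]]. Qed.

Lemma Dg_S c : Dg c.+1 = Dg c + 2 ^ c.
Proof. rewrite /Dg; have [h1 [h2 h3]] := pow_facts c; rewrite h3; lia. Qed.

Lemma Dg_lt c : Dg c < 2 ^ c.
Proof. rewrite /Dg; have [h1 [h2 h3]] := pow_facts c; lia. Qed.

Lemma phiS_le c t : t <= Dg c -> phi c.+1 t = phi c t.
Proof. by move=> h /=; rewrite h. Qed.

Lemma phiS_ge c t : Dg c <= t ->
  phi c.+1 t = phi c (Dg c) + 2 * c.+1 * (t - Dg c) + psi c (t - Dg c).
Proof.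
move=> h /=; case: ifP => // h2.
have -> : t = Dg c by apply/eqP; rewrite eqn_leq h h2.
by rewrite subnn /psi logn_bin_pow2_0 !muln0 !addn0.
Qed.

Lemma psi_le c j : psi c j <= c.
Proof. exact: logn_bin_pow2_le. Qed.

Lemma psi0 c : psi c 0 = 0.
Proof. exact: logn_bin_pow2_0. Qed.

Lemma psi_top c : psi c (2 ^ c) = 0.
Proof. exact: logn_bin_pow2_top. Qed.

Lemma psi_val c j : 0 < j -> j <= 2 ^ c -> psi c j + logn 2 j = c.
Proof. exact: logn_bin_pow2. Qed.

Lemma psi_sym c i : i <= 2 ^ c -> psi c (2 ^ c - i) = psi c i.
Proof. by move=> h; rewrite /psi bin_sub. Qed.

Lemma phi_props c :
  (forall s, s <= Dg c -> phi c (Dg c) <= phi c s + 2 * c * (Dg c - s)) /\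
  (forall s t, s < t -> t <= Dg c -> phi c t + 1 <= phi c s + 2 * c * (t - s) + c) /\
  (forall i, 0 < i -> i <= Dg c ->
      phi c (Dg c) + c + 1 <= phi c (Dg c - i) + 2 * c.+1 * i + logn 2 i) /\
  (forall s t, s <= t -> t <= Dg c -> phi c s <= phi c t).
Proof.
elim: c => [|c [P1' [P1 [P2 Mo]]]].
  rewrite /Dg /=; split; [|split; [|split]]; move=> *; lia.
have [e1 [e2 e3]] := pow_facts c.
have DS := Dg_S c. have Dl := Dg_lt c.
have pl := psi_le c.
have ph1 : phi c.+1 (Dg c.+1) = phi c (Dg c) + 2 * c.+1 * 2 ^ c.
  rewrite phiS_ge; last by lia.
  by rewrite DS addKn psi_top addn0.
split; [|split; [|split]].
- move=> s hs; rewrite ph1.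
  case: (leqP s (Dg c)) => h.
  + rewrite phiS_le //; have := P1' s h; nia.
  + rewrite phiS_ge; last by lia.
    have := pl (s - Dg c); nia.
- move=> s t hst ht.
  case: (leqP t (Dg c)) => h.
  + rewrite !phiS_le //; last by lia.
    have := P1 s t hst h; nia.
  + rewrite (phiS_ge (t:=t)); last by lia.
    have := pl (t - Dg c).
    case: (leqP s (Dg c)) => h2.
    * rewrite phiS_le //; have := P1' s h2; nia.
    * rewrite phiS_ge; last by lia.
      have := pl (s - Dg c); nia.
- move=> i i0 hi; rewrite ph1.
  case: (leqP i (2 ^ c)) => h.
  + rewrite phiS_ge; last by lia.
    have -> : Dg c.+1 - i - Dg c = 2 ^ c - i by lia.
    rewrite psi_sym //.
    have := psi_val i0 h; nia.
  + rewrite phiS_le; last by lia.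
    have -> : Dg c.+1 - i = Dg c - (i - 2 ^ c) by lia.
    have := P1' (Dg c - (i - 2 ^ c)) (leq_subr _ _).
    have -> : Dg c - (Dg c - (i - 2 ^ c)) = i - 2 ^ c by lia.
    nia.
- move=> s t hst ht.
  case: (leqP t (Dg c)) => h.
  + rewrite !phiS_le //; [exact: Mo | lia].
  + rewrite (phiS_ge (t:=t)); last by lia.
    case: (leqP s (Dg c)) => h2.
    * rewrite phiS_le //; have := Mo s (Dg c) h2 (leqnn _); nia.
    * rewrite phiS_ge; last by lia.
      have hj : 0 < t - Dg c by lia.
      have ht2 : t - Dg c <= 2 ^ c by lia.
      have := psi_val hj ht2.
      have := logn_le_self (t - Dg c).
      have := pl (s - Dg c).
      have := pl (t - Dg c).
      case: (ltnP (s - Dg c) (t - Dg c)) => h3; last by have -> : s = t by lia.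
      nia.
Qed.

Lemma phi_0 c : phi c 0 = 0.
Proof. by elim: c => //= c ->. Qed.

Lemma dom_ineq c t j : t <= Dg c.+1 -> j <= t -> j <= 2 ^ c -> t - j <= Dg c ->
  j != t - Dg c ->
  2 * c.+1 * (t - Dg c) + psi c (t - Dg c) + phi c (t - (t - Dg c)) <
  2 * c.+1 * j + psi c j + phi c (t - j).
Proof.
move=> ht hjt hj2 htj hne.
have [P1' [P1 [P2 _]]] := phi_props c.
have DS := Dg_S c.
case: (leqP t (Dg c)) => hD.
  have -> : t - Dg c = 0 by lia.
  rewrite psi0 subn0 !muln0 !add0n.
  have j0 : 0 < j by move: hne; rewrite (_ : t - Dg c = 0); [lia | lia].
  have := P1 (t - j) t ltac:(lia) hD.
  have := psi_val j0 hj2.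
  have := logn_le_self j.
  have -> : t - (t - j) = j by lia.
  lia.
have hj0' : t - Dg c <= 2 ^ c by lia.
have hj0 : 0 < t - Dg c by lia.
have hjj : t - Dg c < j by move: hne; lia.
have hi : 0 < j - (t - Dg c) by lia.
have hiD : j - (t - Dg c) <= Dg c by lia.
have h1 := P1' (Dg c - (j - (t - Dg c))) (leq_subr _ _).
rewrite (_ : Dg c - (Dg c - (j - (t - Dg c))) = j - (t - Dg c)) in h1; last by lia.
have h2 := P2 _ hi hiD.
have e1 := psi_val hj0 hj0'.
have e2 := @psi_val c j ltac:(lia) hj2.
rewrite (_ : t - j = Dg c - (j - (t - Dg c))); last by lia.
rewrite (_ : t - (t - Dg c) = Dg c); last by lia.
have e3 : j = (t - Dg c) + (j - (t - Dg c)) by lia.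
case: (logn_min hj0 hi) => h3; rewrite -?e3 in h3; nia.
Qed.

End MP3.
Import MP3.

Module MP4.
Set Implicit Arguments. Unset Strict Implicit. Unset Printing Implicit Defensive.
Import GRing.Theory Num.Theory.
Local Open Scope ring_scope.

Definition fac (a b : int) : {poly int} := a%:P * 'X + b%:P.
Definition LP (a : int) (b : nat -> int) (m : nat) : {poly int} :=
  \prod_(0 <= i < m) fac a (b i).

Lemma coef_mulfac (p : {poly int}) a b t :
  (p * fac a b)`_t = (if t is t'.+1 then p`_t' * a else 0) + p`_t * b.
Proof.
rewrite /fac mulrDr coefD mulrA coefMX coefMC coefMC.
by case: t.
Qed.

Lemma prod_fac_gt (r : seq nat) (P : pred nat) a (b : nat -> int) t :
  (count P r < t)%N -> (\prod_(i <- r | P i) fac a (b i))`_t = 0.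
Proof.
elim: r t => [|x r IH] t ht.
  by rewrite big_nil coef1; case: t ht.
rewrite big_cons /=; case: ifP => hP; last first.
  by apply: IH; move: ht; rewrite /= hP.
rewrite mulrC coef_mulfac.
move: ht; rewrite /= hP; case: t => // t ht.
by rewrite !IH ?mul0r ?addr0 //; lia.
Qed.

Lemma LP_gt a b m t : (m < t)%N -> (LP a b m)`_t = 0.
Proof.
move=> h; rewrite /LP; apply: (prod_fac_gt (P:=xpredT)).
by rewrite count_predT size_iota subn0.
Qed.

Lemma LPS a b m : LP a b m.+1 = LP a b m * fac a (b m).
Proof. by rewrite /LP big_nat_recr. Qed.

Lemma LP_scale a b m t : (LP a b m)`_t = a ^+ t * (LP 1 b m)`_t.
Proof.
elim: m t => [|m IH] t.
  by rewrite /LP !big_geq // coef1; case: t => [|t] /=; rewrite ?mulr0 ?mul1r ?expr0.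
rewrite !LPS !coef_mulfac; case: t => [|t].
  by rewrite IH expr0 !mul1r add0r.
rewrite !IH exprS; ring.
Qed.

Lemma LP_top a b m : (LP a b m)`_m = a ^+ m.
Proof.
elim: m => [|m IH]; first by rewrite /LP big_geq // coef1.
by rewrite LPS coef_mulfac IH LP_gt // mul0r addr0 exprSr.
Qed.

Lemma LP_0 a b m : (LP a b m)`_0 = \prod_(0 <= i < m) b i.
Proof.
elim: m => [|m IH]; first by rewrite /LP !big_geq // coef1.
by rewrite LPS coef_mulfac IH big_nat_recr //= add0r.
Qed.

End MP4.
Import MP4.

Module MP5.
Set Implicit Arguments. Unset Strict Implicit. Unset Printing Implicit Defensive.
Import GRing.Theory Num.Theory.
Local Open Scope ring_scope.

Definition Qp (b : nat -> int) m u : {poly int} :=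
  \prod_(0 <= v < m) (if v != u then fac 1 (b v) else 1).

Lemma QpS b m u : (u < m)%N -> Qp b m.+1 u = Qp b m u * fac 1 (b m).
Proof.
move=> h; rewrite /Qp big_nat_recr //=.
by have -> : (m != u) by rewrite neq_ltn h orbT.
Qed.

Lemma Qp_top b m : Qp b m.+1 m = LP 1 b m.
Proof.
rewrite /Qp big_nat_recr //= eqxx mulr1 /LP.
apply: eq_big_nat => v /andP[_ h].
by rewrite neq_ltn h.
Qed.

Lemma fac_deriv b : (fac 1 b)^`() = 1.
Proof. by rewrite /fac polyC1 mul1r derivD derivX derivC addr0. Qed.

Lemma LP_deriv b m : (LP 1 b m)^`() = \sum_(0 <= u < m) Qp b m u.
Proof.
elim: m => [|m IH]; first by rewrite /LP !big_geq // -polyC1 derivC.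
rewrite LPS derivM IH fac_deriv mulr1 big_nat_recr //= Qp_top.
congr (_ + _); rewrite mulr_suml; apply: eq_big_nat => u /andP[_ h].
by rewrite QpS.
Qed.

Lemma LP_split b m u : (u < m)%N -> LP 1 b m = fac 1 (b u) * Qp b m u.
Proof.
elim: m => [|m IH] // h.
rewrite LPS; case: (ltngtP u m) => h2.
- by rewrite IH // QpS // mulrA.
- lia.
- by rewrite h2 Qp_top mulrC.
Qed.

Lemma Qp_gt b m u t : (u < m)%N -> (m <= t)%N -> (Qp b m u)`_t = 0.
Proof.
elim: m t => [|m IH] t // h ht.
case: (ltngtP u m) => h2.
- rewrite QpS // coef_mulfac; case: t ht => // t ht.
  rewrite !IH ?mul0r ?addr0 //; lia.
- lia.
- by rewrite h2 Qp_top LP_gt.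
Qed.

Lemma synth (Q : {poly int}) (b0 : int) k j :
  \sum_(0 <= i < j) (Q * fac 1 b0)`_(k + i).+1 * (- b0) ^+ i =
  Q`_k - (- b0) ^+ j * Q`_(k + j).
Proof.
elim: j => [|j IH]; first by rewrite big_geq // expr0 mul1r addn0 subrr.
rewrite big_nat_recr //= IH coef_mulfac addnS exprS; ring.
Qed.

Definition psum (b : nat -> int) m i := \sum_(0 <= u < m) (- b u) ^+ i.

Lemma newton b m k : (0 < k)%N -> (k <= m)%N ->
  (LP 1 b m)`_k *+ k = \sum_(0 <= i < (m - k).+1) (LP 1 b m)`_(k + i) * psum b m i.
Proof.
case: k => // k _ hk.
rewrite -coef_deriv LP_deriv coef_sum.
have h1 : forall u, (u < m)%N -> (Qp b m u)`_k =
    \sum_(0 <= i < (m - k.+1).+1) (LP 1 b m)`_(k.+1 + i) * (- b u) ^+ i.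
  move=> u hu.
  have := synth (Qp b m u) (b u) k (m - k).
  have hz : (Qp b m u)`_(k + (m - k)) = 0 by apply: Qp_gt => //; lia.
  rewrite hz.
  rewrite mulr0 subr0 => <-.
  have -> : (m - k.+1).+1 = (m - k)%N by lia.
  apply: eq_big_nat => i _.
  by rewrite (LP_split b hu) addSn (mulrC (fac 1 (b u))).
rewrite (eq_big_nat _ _ (fun u hu => h1 u (andP hu).2)) exchange_big_nat.
apply: eq_big_nat => i _; by rewrite /psum mulr_sumr.
Qed.

End MP5.
Import MP5.

Module MP6a.
Set Implicit Arguments. Unset Strict Implicit. Unset Printing Implicit Defensive.
Import GRing.Theory Num.Theory.
Local Open Scope ring_scope.


Lemma sum_split2 (F : nat -> int) n :
  \sum_(0 <= u < n + n) F u =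
  \sum_(0 <= u < n) F u + \sum_(0 <= u < n) F (n + n - 1 - u)%N.
Proof.
rewrite (big_cat_nat _ (n := n)) //=; last by lia.
congr (_ + _).
rewrite -{1}(add0n n) big_addn big_nat_rev /=.
have -> : (n + n - n = n)%N by lia.
apply: eq_big_nat => u /andP[_ h]; congr F; lia.
Qed.

Lemma pow_cong (x y d : int) k : (d %| x - y)%Z -> (d %| x ^+ k - y ^+ k)%Z.
Proof. by move=> h; rewrite subrXX; apply: dvdz_mulr. Qed.

Lemma sq_refl (x : int) c :
  (2 ^+ c.+3 %| (2 ^+ c.+2 - x) ^+ 2 - x ^+ 2)%Z.
Proof.
apply/dvdzP; exists (2 ^+ c.+1 - x).
rewrite !exprS; ring.
Qed.

Lemma S_cong c i : (0 < i)%N ->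
  (2 ^+ c.+1 %| \sum_(0 <= u < 2 ^ c) ((2 * u + 1)%N%:Z) ^+ (2 * i) - (2 ^ c)%N%:Z)%Z.
Proof.
move=> i0; elim: c => [|c IH].
  by rewrite expn0 big_nat1 /= expr1n subrr dvdz0.
have e2 : (2 ^ c.+1 = 2 ^ c + 2 ^ c)%N by rewrite expnS; lia.
rewrite e2 sum_split2.
set n := (2 ^ c)%N.
set F := fun u : nat => ((2 * u + 1)%N%:Z) ^+ (2 * i).
have hF : forall u, (u < n)%N ->
   F (n + n - 1 - u)%N = (2 ^+ c.+2 - (2 * u + 1)%N%:Z) ^+ (2 * i).
  move=> u hu; rewrite /F; congr (_ ^+ _).
  have -> : ((2 * (n + n - 1 - u) + 1)%N = 4 * n - (2 * u + 1))%N by lia.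
  rewrite -subzn; last by lia.
  by rewrite PoszM /n pow2z !exprS mulrA.
have -> : \sum_(0 <= u < n) F u + \sum_(0 <= u < n) F (n + n - 1 - u)%N - (n + n)%N%:Z
   = 2 * (\sum_(0 <= u < n) F u - n%:Z) +
     \sum_(0 <= u < n) (F (n + n - 1 - u)%N - F u).
  rewrite sumrB PoszD; ring.
apply: rpredD.
  by rewrite exprS; apply: dvdz_mul.
rewrite big_nat_cond; apply: rpred_sum => u /andP[/andP[_ hu] _].
rewrite hF // /F !exprM.
apply: (dvdz_trans (dvdz_exp2l 2 (leqnSn c.+2))).
apply: pow_cong; exact: sq_refl.
Qed.

Definition bK c u : int := 2 ^+ (2 * c + 2) - ((2 * u + 1)%N%:Z) ^+ 2.

Lemma P_cong c i : (0 < i)%N ->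
  (2 ^+ c.+1 %| psum (bK c) (2 ^ c) i - (2 ^ c)%N%:Z)%Z.
Proof.
move=> i0.
have -> : psum (bK c) (2 ^ c) i - (2 ^ c)%N%:Z =
   \sum_(0 <= u < 2 ^ c) ((- bK c u) ^+ i - (((2 * u + 1)%N%:Z) ^+ 2) ^+ i) +
   (\sum_(0 <= u < 2 ^ c) ((2 * u + 1)%N%:Z) ^+ (2 * i) - (2 ^ c)%N%:Z).
  rewrite sumrB /psum; under [X in _ = _ - X + _]eq_bigr do rewrite -exprM; ring.
apply: rpredD; last exact: S_cong.
apply: rpred_sum => u _; apply: pow_cong.
have -> : - bK c u - ((2 * u + 1)%N%:Z) ^+ 2 = - 2 ^+ (2 * c + 2) by rewrite /bK; ring.
rewrite rpredN; apply: dvdz_exp2l; lia.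
Qed.

End MP6a.
Import MP6a.

Module MP6b.
Set Implicit Arguments. Unset Strict Implicit. Unset Printing Implicit Defensive.
Import GRing.Theory Num.Theory.
Local Open Scope ring_scope.

Lemma LB_coef m k : (LP 1 (fun _ => -1) m)`_k = (-1) ^+ (m - k) * ('C(m, k))%:Z.
Proof.
elim: m k => [|m IH] k.
  by rewrite /LP big_geq // coef1; case: k => [|k]; rewrite ?expr0 ?mul1r ?bin0 ?bin0n.
rewrite LPS coef_mulfac; case: k => [|k].
  by rewrite IH !subn0 !bin0 exprS; ring.
rewrite !IH binS PoszD subSS.
case: (ltnP k m) => h.
  have -> : (m - k)%N = (m - k.+1).+1 by lia.
  rewrite exprS; ring.
rewrite (@bin_small m k.+1); last by lia.
ring.
Qed.

Lemma psum_LB m i : psum (fun _ => -1) m i = m%:Z.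
Proof.
rewrite /psum; under eq_bigr do rewrite opprK expr1n.
by rewrite sumr_const_nat subn0 natz.
Qed.

Lemma newton' b m k : (0 < k)%N -> (k <= m)%N ->
  (LP 1 b m)`_k * (k%:Z - m%:Z) =
  \sum_(0 <= i < m - k) (LP 1 b m)`_(k + i.+1) * psum b m i.+1.
Proof.
move=> k0 km; have := newton b k0 km.
rewrite big_nat_recl // addn0.
have -> : psum b m 0 = m%:Z.
  by rewrite /psum; under eq_bigr do rewrite expr0; rewrite sumr_const_nat subn0 natz.
move=> e; rewrite -mulr_natr natz in e; rewrite mulrBr e; ring.
Qed.

Lemma Kdelta c : forall k, (0 < k)%N -> (k <= 2 ^ c)%N ->
  let D := (LP 1 (bK c) (2 ^ c))`_k - (LP 1 (fun _ => -1) (2 ^ c))`_k in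
  (2 %| D)%Z /\ (2 ^+ c.+1 %| D * (2 ^ c - k)%N%:Z)%Z.
Proof.
set m := (2 ^ c)%N.
have hm : (0 < m)%N by rewrite expn_gt0.
suff H : forall n k, (m - n <= k)%N -> (0 < k)%N -> (k <= m)%N ->
  let D := (LP 1 (bK c) m)`_k - (LP 1 (fun _ => -1) m)`_k in
  (2 %| D)%Z /\ (2 ^+ c.+1 %| D * (m - k)%N%:Z)%Z.
  by move=> k k0 km; apply: (H m) => //; lia.
elim=> [|n IH] k hk k0 km /=.
  have -> : k = m by lia.
  by rewrite !LP_top expr1n subrr dvdz0 mul0r dvdz0.
case: (leqP (m - n) k) => hk2; first exact: IH.
have hkm : (k < m)%N by lia.
set Dl := fun j => (LP 1 (bK c) m)`_j - (LP 1 (fun _ => -1) m)`_j.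
have eq1 := newton' (bK c) k0 km.
have eq2 := newton' (fun _ => -1) k0 km.
have key : Dl k * (k%:Z - m%:Z) =
   \sum_(0 <= i < m - k) (Dl (k + i.+1)%N * psum (bK c) m i.+1 +
      (LP 1 (fun _ => -1) m)`_(k + i.+1) * (psum (bK c) m i.+1 - m%:Z)).
  rewrite /Dl mulrBl eq1 eq2 -sumrB; apply: eq_bigr => i _.
  rewrite psum_LB; ring.
have h2 : (2 ^+ c.+1 %| Dl k * (k%:Z - m%:Z))%Z.
  rewrite key big_nat_cond; apply: rpred_sum => i /andP[/andP[_ hi] _].
  have hP := P_cong c (isT : (0 < i.+1)%N).
  apply: rpredD; last exact: dvdz_mull.
  rewrite exprS; apply: dvdz_mul.
    by case: (IH (k + i.+1)%N) => //; lia.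
  have -> : psum (bK c) (2 ^ c) i.+1 = (psum (bK c) (2 ^ c) i.+1 - (2 ^ c)%N%:Z) + (2 ^ c)%N%:Z by ring.
  apply: rpredD; first by apply: (dvd2_le' (leqnSn c)).
  by rewrite pow2z.
have h3 : (2 ^+ c.+1 %| Dl k * (m - k)%N%:Z)%Z.
  rewrite -subzn; last by lia.
  have -> : Dl k * (m%:Z - k%:Z) = - (Dl k * (k%:Z - m%:Z)) by ring.
  by rewrite rpredN.
split => //; change (2 %| Dl k)%Z.
have [->|nz] := eqVneq (Dl k) 0; first exact: dvdz0.
have nz2 : (m - k)%N%:Z != 0 by apply/eqP; lia.
move: h3; rewrite dvd2vz'; last by rewrite mulf_neq0.
rewrite vzM // vz_nat => h4.
have h5 := @logn_lt (m - k)%N c ltac:(lia) ltac:(rewrite /m in hkm *; lia).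
have : (1 <= vz (Dl k))%N by lia.
by rewrite -dvd2vz' // expr1.
Qed.

Lemma odd_not2 (x : int) : ~~ (2 %| x)%Z -> x != 0.
Proof. by apply: contraNneq => ->; rewrite dvdz0. Qed.

Lemma bK_odd c u : ~~ (2 %| bK c u)%Z.
Proof.
have -> : bK c u = 2 * (2 ^+ (2 * c + 1) - 2 * (u%:Z) ^+ 2 - 2 * u%:Z - 1) + 1.
  rewrite /bK PoszD PoszM; have -> : (2 * c + 2 = (2 * c + 1).+1)%N by lia.
  rewrite exprS; ring.
rewrite rpredDl; first by rewrite dvdz1.
exact: dvdz_mulr (dvdzz 2).
Qed.

Lemma odd_mul (x y : int) : ~~ (2 %| x)%Z -> ~~ (2 %| y)%Z -> ~~ (2 %| x * y)%Z.
Proof.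
rewrite !dvdzE abszM Euclid_dvdM //.
by move=> /negbTE -> /negbTE ->.
Qed.

Lemma Klemma c j : (j <= 2 ^ c)%N ->
  (LP 1 (bK c) (2 ^ c))`_j != 0 /\ vz ((LP 1 (bK c) (2 ^ c))`_j) = psi c j.
Proof.
move=> hj.
case: (posnP j) => [->|j0].
  rewrite LP_0 psi0.
  have ho : ~~ (2 %| \prod_(0 <= i < 2 ^ c) bK c i)%Z.
    apply: (big_ind (fun x => ~~ (2 %| x)%Z)) => //.
    - exact: odd_mul.
    - move=> i _; exact: bK_odd.
  split; first exact: odd_not2.
  apply/eqP; rewrite -leqn0 leqNgt; apply/negP.
  by rewrite -dvd2vz' ?expr1 //; [move/negP: ho | exact: odd_not2].
case: (ltngtP j (2 ^ c)) hj => // hj _; last first.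
  by rewrite hj LP_top expr1n psi_top /vz.
have [hD1 hD2] := Kdelta j0 (ltnW hj).
set D := _ - _ in hD1 hD2.
set B := (LP 1 (fun _ => -1) (2 ^ c))`_j.
have eB : B = (-1) ^+ (2 ^ c - j) * ('C(2 ^ c, j))%:Z by rewrite /B LB_coef.
have nB : B != 0 by rewrite eB mulf_neq0 ?signr_eq0 // -lt0n bin_gt0 ltnW.
have vB : vz B = psi c j by rewrite eB /vz abszMsign absz_nat.
have hps : psi c j + logn 2 (2 ^ c - j) = c.
  rewrite -(psi_sym (ltnW hj)); apply: psi_val; lia.
have hdiv : (2 ^+ (vz B).+1 %| D)%Z.
  have [->|nz] := eqVneq D 0; first exact: dvdz0.
  have nz2 : (2 ^ c - j)%N%:Z != 0 by apply/eqP; lia.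
  move: hD2; rewrite dvd2vz'; last by rewrite mulf_neq0.
  rewrite vzM // vz_nat => h4.
  rewrite dvd2vz' //; lia.
have := vz_dom' nB hdiv.
have -> : B + D = (LP 1 (bK c) (2 ^ c))`_j by rewrite /D /B; ring.
by case => ->; rewrite vB.
Qed.

End MP6b.
Import MP6b.

Module MP7.
Set Implicit Arguments. Unset Strict Implicit. Unset Printing Implicit Defensive.
Import GRing.Theory Num.Theory.
Local Open Scope ring_scope.

Definition bG c i : int := 2 ^+ (2 * c) - ((i + 1)%N%:Z) ^+ 2.
Definition Gp c := LP (2 ^+ (2 * c)) (bG c) (2 ^ c - 1).
Definition Kp c := LP (2 ^+ (2 * c + 2)) (bK c) (2 ^ c).

Lemma prod_split2 (F : nat -> {poly int}) k :
  \prod_(0 <= i < (2 * k).-1) F i =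
  (\prod_(0 <= j < k) F (2 * j)%N) * \prod_(0 <= j < k.-1) F (2 * j + 1)%N.
Proof.
elim: k => [|k IH]; first by rewrite !big_geq // mulr1.
case: k IH => [|k] IH.
  by rewrite /= big_nat1 big_nat1 big_geq // mulr1.
have -> : (2 * k.+2).-1 = ((2 * k.+1).-1).+2 by lia.
rewrite big_nat_recr // big_nat_recr // IH.
rewrite (big_nat_recr k.+1) //.
rewrite [in X in _ = _ * X]big_nat_recr //.
have -> : ((2 * k.+1).-1 = 2 * k + 1)%N by lia.
have -> : ((2 * k + 1).+1 = 2 * k.+1)%N by lia.
simpl; ring.
Qed.

Lemma Gp_rec c : Gp c.+1 = ((2 ^+ 2) ^+ (2 ^ c - 1))%:P * (Kp c * Gp c).
Proof.
rewrite /Gp /LP.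
have -> : (2 ^ c.+1 - 1 = (2 * 2 ^ c).-1)%N by rewrite expnS subn1.
rewrite prod_split2.
have -> : \prod_(0 <= j < 2 ^ c) fac (2 ^+ (2 * c.+1)) (bG c.+1 (2 * j))
    = Kp c.
  rewrite /Kp /LP; apply: eq_big_nat => j _.
  rewrite /bG /bK (_ : (2 * c.+1 = 2 * c + 2)%N) //; lia.
have -> : \prod_(0 <= j < (2 ^ c).-1) fac (2 ^+ (2 * c.+1)) (bG c.+1 (2 * j + 1))
    = \prod_(0 <= j < 2 ^ c - 1) ((2 ^+ 2)%:P * fac (2 ^+ (2 * c)) (bG c j)).
  rewrite subn1; apply: eq_big_nat => j _.
  rewrite /fac /bG mulrDr mulrA -!polyCM; congr (_ %:P * 'X + _ %:P).
    by rewrite -exprD; congr (_ ^+ _); lia.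
  have -> : ((2 * j + 1 + 1) = 2 * (j + 1))%N by lia.
  rewrite PoszM; have -> : (2 * c.+1 = 2 + 2 * c)%N by lia.
  rewrite exprD; ring.
rewrite big_split /= prodr_const_nat subn0 -rmorphXn /=.
ring.
Qed.

Lemma Gp_coef c t : (Gp c.+1)`_t =
  (2 ^+ 2) ^+ (2 ^ c - 1) * \sum_(j < t.+1) (Kp c)`_j * (Gp c)`_(t - j).
Proof. by rewrite Gp_rec coefCM coefM. Qed.

Lemma vz_pow2 e : vz (2 ^+ e) = e.
Proof. by rewrite -pow2z vz2. Qed.

Lemma pow2_neq0 e : (2 : int) ^+ e != 0.
Proof. by rewrite expf_neq0. Qed.

Lemma Kp_val c j : (j <= 2 ^ c)%N ->
  (Kp c)`_j != 0 /\ vz ((Kp c)`_j) = ((2 * c + 2) * j + psi c j)%N.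
Proof.
move=> hj; have [nz v] := Klemma hj.
rewrite /Kp LP_scale -exprM; split; first by rewrite mulf_neq0 ?pow2_neq0.
by rewrite vzM ?pow2_neq0 // vz_pow2 v.
Qed.

Lemma Kp_gt c j : (2 ^ c < j)%N -> (Kp c)`_j = 0.
Proof. exact: LP_gt. Qed.

Lemma Gp_gt c t : (Dg c < t)%N -> (Gp c)`_t = 0.
Proof. by move=> h; apply: LP_gt; move: h; rewrite /Dg subn1. Qed.

Lemma phi_rec c t : phi c.+1 t =
  (2 * c.+1 * (t - Dg c) + psi c (t - Dg c) + phi c (t - (t - Dg c)))%N.
Proof.
case: (leqP t (Dg c)) => h.
  rewrite phiS_le // (_ : (t - Dg c = 0)%N); last by lia.
  by rewrite psi0 muln0 subn0.
rewrite phiS_ge; last by lia.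
rewrite (_ : (t - (t - Dg c) = Dg c)%N); last by lia.
lia.
Qed.

Lemma Gval c : forall t, (t <= Dg c)%N ->
  (Gp c)`_t != 0 /\ vz ((Gp c)`_t) = (vz ((Gp c)`_0) + phi c t)%N.
Proof.
elim: c => [|c IH] t ht.
  have -> : t = 0%N by move: ht; rewrite /Dg; lia.
  by rewrite /Gp /LP big_geq // coef1 /= addn0.
have step : forall t, (t <= Dg c.+1)%N -> (Gp c.+1)`_t != 0 /\
   vz ((Gp c.+1)`_t) = (2 * (2 ^ c - 1) + (2 * c.+1 * (t - Dg c) + psi c (t - Dg c)
      + (vz ((Gp c)`_0) + phi c (t - (t - Dg c)))))%N.
  move=> {}t {}ht.
  have DS := Dg_S c.
  have hj0 : (t - Dg c < t.+1)%N by lia.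
  have hj0K : (t - Dg c <= 2 ^ c)%N by lia.
  have hs : (t - (t - Dg c) <= Dg c)%N by lia.
  rewrite Gp_coef (bigD1 (Ordinal hj0)) //=.
  have [nk vk] := Kp_val hj0K.
  have [ng vg] := IH _ hs.
  set X := (Kp c)`_(t - Dg c) * (Gp c)`_(t - (t - Dg c)).
  have nX : X != 0 by rewrite mulf_neq0.
  have vX : vz X = ((2 * c + 2) * (t - Dg c) + psi c (t - Dg c) +
                    (vz ((Gp c)`_0) + phi c (t - (t - Dg c))))%N.
    by rewrite /X vzM // vk vg.
  have hY : (2 ^+ (vz X).+1 %|
      \sum_(j < t.+1 | j != Ordinal hj0) (Kp c)`_j * (Gp c)`_(t - j))%Z.
    apply: rpred_sum => [[j hj]] /= hne.
    have hne' : j != (t - Dg c)%N.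
      apply: contra hne => /eqP e; apply/eqP; exact: val_inj.
    case: (leqP j (2 ^ c)) => hjK; last by rewrite Kp_gt // mul0r dvdz0.
    case: (leqP (t - j) (Dg c)) => hjs; last by rewrite Gp_gt // mulr0 dvdz0.
    have [nk' vk'] := Kp_val hjK.
    have [ng' vg'] := IH _ hjs.
    rewrite dvd2vz'; last by rewrite mulf_neq0.
    rewrite vX (vzM nk' ng') vk' vg'.
    have := dom_ineq ht (j := j) ltac:(lia) hjK hjs hne'.
    nia.
  have [nz vz'] := vz_dom' nX hY.
  split; first by rewrite mulf_neq0 // -exprM pow2_neq0.
  rewrite vzM // -?exprM ?pow2_neq0 // vz_pow2 vz' vX.
  by rewrite (_ : (2 * c + 2 = 2 * c.+1)%N); last by lia.
have [n0 v0] := step 0%N isT.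
have [nt vt] := step t ht.
split => //.
rewrite vt v0 phi_rec.
have -> : (0 - Dg c = 0)%N by [].
rewrite psi0 muln0 subn0 phi_0.
lia.
Qed.

Lemma phi_mono c s t : (s <= t)%N -> (t <= Dg c)%N -> (phi c s <= phi c t)%N.
Proof. by have [_ [_ [_ Mo]]] := phi_props c; apply: Mo. Qed.

End MP7.
Import MP7.

Module MP8.
Set Implicit Arguments. Unset Strict Implicit. Unset Printing Implicit Defensive.
Import GRing.Theory Num.Theory.
Local Open Scope ring_scope.

Lemma coef_XaddC_exp (a : int) t j :
  (('X + a%:P) ^+ t)`_j = a ^+ (t - j) * ('C(t, j))%:Z.
Proof.
have hf : 'X + a%:P = fac 1 a by rewrite /fac polyC1 mul1r.
elim: t j => [|t IH] j.
  by rewrite expr0 coef1; case: j => [|j]; rewrite ?bin0 ?bin0n ?mulr1 ?mulr0.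
rewrite exprSr hf coef_mulfac -hf; case: j => [|j].
  by rewrite IH !subn0 !bin0 exprS; ring.
rewrite !IH binS PoszD subSS.
case: (ltnP j t) => h.
  have -> : (t - j)%N = (t - j.+1).+1 by lia.
  rewrite exprS; ring.
case: (ltngtP j t) h => // h _.
  rewrite (@bin_small t j.+1); last by lia.
  rewrite (@bin_small t j); last by lia.
  ring.
rewrite h binn subnn (@bin_small t t.+1) //; ring.
Qed.

Definition Ec (c t j : nat) : int :=
  (('X + (2 ^+ c)%:P) * ('X + (2 ^+ c.+1)%:P) ^+ t)`_j.

Lemma Ec_eq c t j : Ec c t j =
  (if j is j'.+1 then (2 ^+ c.+1) ^+ (t - j') * ('C(t, j'))%:Z else 0)
  + 2 ^+ c * ((2 ^+ c.+1) ^+ (t - j) * ('C(t, j))%:Z).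
Proof.
rewrite /Ec mulrDl coefD coefXM coefCM coef_XaddC_exp.
by case: j => [|j] //=; rewrite coef_XaddC_exp.
Qed.

Lemma Ec_top c t : Ec c t t.+1 = 1.
Proof. by rewrite Ec_eq subnn binn bin_small // expr0; ring. Qed.

Lemma Ec_zero c t j : (t.+1 < j)%N -> Ec c t j = 0.
Proof.
move=> h; rewrite Ec_eq; case: j h => // j h.
by rewrite !bin_small ?mulr0 ?addr0 //; lia.
Qed.

Lemma Ec_diag c t : Ec c t t = 2 ^+ c * (2 * t%:Z + 1).
Proof.
rewrite Ec_eq subnn binn expr0; case: t => [|t].
  by rewrite mulr0 add0r; ring.
rewrite (_ : (t.+1 - t = 1)%N); last by lia.
by rewrite binSn expr1 exprS; ring.
Qed.

Lemma Ec_div c t j : (j < t)%N -> (2 ^+ (c + c.+1 * (t - j)) %| Ec c t j)%Z.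
Proof.
move=> h; rewrite Ec_eq; apply: rpredD.
  case: j h => [|j] h; first exact: dvdz0.
  apply: dvdz_mulr; rewrite -exprM; apply: dvdz_exp2l; nia.
rewrite mulrA; apply: dvdz_mulr; rewrite -exprM -exprD; exact: dvdzz.
Qed.

Definition Wp c := LP 1 (bG c) (2 ^ c - 1).
Definition qp c : {poly int} := 'X * ('X + (2 ^+ c.+1)%:P).

Lemma fac_comp b q : fac 1 b \Po q = q + b%:P.
Proof.
by rewrite /fac comp_polyD comp_polyC comp_polyM comp_polyC comp_polyX polyC1 mul1r.
Qed.

Lemma pair_fac c d : (d.+1 < 2 ^ c)%N ->
  ('X + (((2 ^ c - d.+1)%N)%:R)%:P) * ('X + (((d + (2 ^ c).+1)%N)%:R)%:P)
  = qp c + (bG c d)%:P :> {poly int}.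
Proof.
move=> h.
rewrite !natz -subzn; last by lia.
rewrite (_ : (d + (2 ^ c).+1)%N = (2 ^ c + d.+1)%N); last by lia.
rewrite PoszD pow2z /qp /bG addn1.
rewrite ?polyCD ?polyCN ?polyCB ?polyCM ?rmorphXn /=.
rewrite (_ : (2 * c = c + c)%N); last by lia.
rewrite exprD !exprS; ring.
Qed.

Lemma rising_fact c : rising_poly (2 ^ c.+1) = 'X * (('X + (2 ^+ c)%:P) * (Wp c \Po qp c)).
Proof.
rewrite /rising_poly -(big_mkord xpredT (fun i => 'X + (i%:R)%:P)).
set F := fun i : nat => 'X + ((i%:R : int))%:P.
set M := (2 ^ c)%N.
have hM : (0 < M)%N by rewrite expn_gt0.
have e2 : (2 ^ c.+1 = M + M)%N by rewrite expnS /M; lia.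
rewrite e2 big_ltn; last by lia.
rewrite (big_cat_nat _ (n := M)) //=; last by lia.
rewrite (big_ltn (m := M)); last by lia.
have h1 : \prod_(1 <= i < M) F i = \prod_(0 <= d < M - 1) F (M - d.+1)%N.
  rewrite big_nat_rev /= big_add1 (_ : M.-1 = M - 1)%N; last by lia.
  apply: eq_big_nat => d hd; congr F; lia.
have h2 : \prod_(M.+1 <= i < M + M) F i = \prod_(0 <= d < M - 1) F (d + M.+1)%N.
  rewrite -{1}(add0n M.+1) big_addn.
  have -> : (M + M - M.+1 = M - 1)%N by lia.
  by [].
rewrite h1 h2.
have h3 : Wp c \Po qp c = \prod_(0 <= d < M - 1) (F (M - d.+1)%N * F (d + M.+1)%N).
  rewrite /Wp /LP rmorph_prod /=.
  apply: eq_big_nat => d hd; rewrite fac_comp /F pair_fac //; lia.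
rewrite h3 big_split /=.
rewrite polyC0 addr0 natz /M pow2z.
ring.
Qed.

Lemma sum_ext (F : nat -> int) n1 n2 :
  (forall i, (n1 <= i)%N -> F i = 0) -> (forall i, (n2 <= i)%N -> F i = 0) ->
  \sum_(i < n1) F i = \sum_(i < n2) F i.
Proof.
wlog le : n1 n2 / (n1 <= n2)%N.
  move=> W h1 h2; case: (leqP n1 n2) => h; first exact: W.
  by symmetry; apply: W => //; exact: ltnW.
move=> h1 _; rewrite -!(big_mkord xpredT F) [in RHS](big_cat_nat _ (n := n1)) //=.
rewrite [X in _ = _ + X]big_nat_cond [X in _ = _ + X]big1 ?addr0 // => i /andP[/andP[hi _] _].
exact: h1.
Qed.

Lemma stir_coef c K :
  stirling1 (2 ^ c.+1) K.+1 = \sum_(i < K.+1) (Wp c)`_i * Ec c i (K - i).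
Proof.
rewrite /stirling1 rising_fact coefXM /= comp_polyE mulr_sumr coef_sum.
have e : forall i : nat, (('X + (2 ^+ c)%:P) * ((Wp c)`_i *: qp c ^+ i))`_K =
    (Wp c)`_i * (if (K < i)%N then 0 else Ec c i (K - i)).
  move=> i; rewrite -scalerAr coefZ /qp exprMn mulrCA coefXnM.
  by case: ifP.
rewrite (eq_bigr (fun i : 'I_(size (Wp c)) =>
    (Wp c)`_i * (if (K < i)%N then 0 else Ec c i (K - i)))); last by move=> i _; apply: e.
rewrite (sum_ext (F := fun i => (Wp c)`_i * (if (K < i)%N then 0 else Ec c i (K - i))) (n2 := K.+1)).
- apply: eq_bigr => i _; have hi := ltn_ord i.
  by rewrite ltnNge -ltnS hi.
- by move=> i hi; rewrite nth_default // mul0r.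
- by move=> i hi; rewrite (_ : (K < i)%N) ?mulr0 //.
Qed.

Lemma Wp_G c t : (Gp c)`_t = (2 ^+ (2 * c)) ^+ t * (Wp c)`_t.
Proof. by rewrite /Gp /Wp LP_scale. Qed.

Lemma Wval c t : (t <= Dg c)%N -> (Wp c)`_t != 0 /\
  vz ((Gp c)`_t) = (2 * c * t + vz ((Wp c)`_t))%N.
Proof.
move=> h; have [nz _] := Gval h.
move: nz; rewrite Wp_G -exprM => nz.
have nW : (Wp c)`_t != 0 by apply: contraNneq nz => ->; rewrite mulr0.
by split => //; rewrite vzM ?pow2_neq0 // vz_pow2.
Qed.

Lemma W_mono c s t : (s <= t)%N -> (t <= Dg c)%N ->
  (vz ((Wp c)`_s) <= vz ((Wp c)`_t) + 2 * c * (t - s))%N.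
Proof.
move=> hst ht.
have hs : (s <= Dg c)%N by lia.
have [_ vs] := Wval hs. have [_ vt] := Wval ht.
have [_ gs] := Gval hs. have [_ gt] := Gval ht.
have := phi_mono hst ht.
nia.
Qed.

Lemma Wp_gt c t : (Dg c < t)%N -> (Wp c)`_t = 0.
Proof. by move=> h; apply: LP_gt; move: h; rewrite /Dg subn1. Qed.

Lemma vz_odd s : vz (2 * s%:Z + 1) = 0%N.
Proof.
have -> : 2 * s%:Z + 1 = (2 * s + 1)%N%:Z by rewrite PoszD PoszM.
by rewrite vz_nat logn_coprime // coprime2n oddD oddM.
Qed.

Lemma odd_nz s : 2 * s%:Z + 1 != 0.
Proof. by rewrite (_ : 2 * s%:Z + 1 = (2 * s + 1)%N%:Z) ?PoszD ?PoszM //; apply/eqP; lia. Qed.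

Lemma stir_odd c s : (s <= Dg c)%N ->
  stirling1 (2 ^ c.+1) (2 * s).+1 != 0 /\
  vz (stirling1 (2 ^ c.+1) (2 * s).+1) = (vz ((Wp c)`_s) + c)%N.
Proof.
move=> hs; rewrite stir_coef.
have hi : (s < (2 * s).+1)%N by lia.
rewrite (bigD1 (Ordinal hi)) //=.
have [nW _] := Wval hs.
have e : (2 * s - s = s)%N by lia.
rewrite e Ec_diag.
set X := (Wp c)`_s * _.
have nX : X != 0.
  by rewrite /X mulf_neq0 // mulf_neq0 ?pow2_neq0 ?odd_nz.
have vX : vz X = (vz ((Wp c)`_s) + c)%N.
  rewrite /X vzM ?mulf_neq0 ?pow2_neq0 ?odd_nz //.
  by rewrite vzM ?pow2_neq0 ?odd_nz // vz_pow2 vz_odd addn0.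
have hY : (2 ^+ (vz X).+1 %|
   \sum_(i < (2 * s).+1 | i != Ordinal hi) (Wp c)`_i * Ec c i (2 * s - i))%Z.
  apply: rpred_sum => [[i hi2]] /= hne.
  have hne' : i != s by apply: contra hne => /eqP ee; apply/eqP; exact: val_inj.
  case: (ltngtP i s) hne' => // h _.
    by rewrite Ec_zero ?mulr0 ?dvdz0 //; lia.
  case: (leqP i (Dg c)) => hD; last by rewrite Wp_gt // mul0r dvdz0.
  have hm := W_mono (ltnW h) hD.
  have hdv := Ec_div c (t := i) (j := (2 * s - i)%N) ltac:(lia).
  apply: (dvd2_le' (e' := (vz ((Wp c)`_i) + (c + c.+1 * (i - (2 * s - i))))%N)).
    rewrite vX; nia.
  by rewrite exprD; apply: dvdz_mul => //; exact: vz_dvd'.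
have [nz vz'] := vz_dom' nX hY.
by split => //; rewrite vz' vX.
Qed.

Lemma stir_even c s : (s <= Dg c)%N ->
  stirling1 (2 ^ c.+1) (2 * s).+2 != 0 /\
  vz (stirling1 (2 ^ c.+1) (2 * s).+2) = vz ((Wp c)`_s).
Proof.
move=> hs; rewrite stir_coef.
have hi : (s < (2 * s).+2)%N by lia.
rewrite (bigD1 (Ordinal hi)) //=.
have [nW _] := Wval hs.
have e : ((2 * s).+1 - s = s.+1)%N by lia.
rewrite e Ec_top mulr1.
have hY : (2 ^+ (vz ((Wp c)`_s)).+1 %|
   \sum_(i < (2 * s).+2 | i != Ordinal hi) (Wp c)`_i * Ec c i ((2 * s).+1 - i))%Z.
  apply: rpred_sum => [[i hi2]] /= hne.
  have hne' : i != s by apply: contra hne => /eqP ee; apply/eqP; exact: val_inj.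
  case: (ltngtP i s) hne' => // h _.
    by rewrite Ec_zero ?mulr0 ?dvdz0 //; lia.
  case: (leqP i (Dg c)) => hD; last by rewrite Wp_gt // mul0r dvdz0.
  have hm := W_mono (ltnW h) hD.
  have hdv := Ec_div c (t := i) (j := ((2 * s).+1 - i)%N) ltac:(lia).
  apply: (dvd2_le' (e' := (vz ((Wp c)`_i) + (c + c.+1 * (i - ((2 * s).+1 - i))))%N)).
    rewrite (_ : (i - ((2 * s).+1 - i) = (i - s) + (i - s - 1))%N); last by lia.
    have : (1 <= i - s)%N by lia.
    move: hm; move: (i - s)%N => [|d] // hm _.
    rewrite (_ : (d.+1 - 1 = d)%N); last by lia.
    clear -hm; move: hm; move: (vz (Wp c)`_s) (vz (Wp c)`_i) => a b; nia.
  by rewrite exprD; apply: dvdz_mul => //; exact: vz_dvd'.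
by have [nz vz'] := vz_dom' nW hY.
Qed.

Lemma stir_top c : stirling1 (2 ^ c.+1) (2 ^ c.+1).+1 = 0.
Proof.
rewrite stir_coef; apply: big1 => [[i hi]] _ /=.
case: (leqP i (Dg c)) => hD; last by rewrite Wp_gt // mul0r.
rewrite Ec_zero ?mulr0 //.
move: hD; rewrite /Dg expnS; have := expn_gt0 2 c; lia.
Qed.

End MP8.
Import MP8.

Unset Implicit Arguments.
Import GRing.Theory Num.Theory.

Theorem mainTheorem11 (n k : nat) :
  (2 <= n)%N -> (1 <= k)%N -> (k <= 2 ^ n)%N ->
  v_gt_minus (v2 (stirling1 (2 ^ n) k.+1)) (v2 (stirling1 (2 ^ n) k)) n.
Proof.
move=> hn hk1 hk2.
have v2E : forall z : int, z != 0%R -> v2 z = Some (vz z).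
  by move=> z nz; rewrite /v2 (negbTE nz).
have [c ec] : exists c, n = c.+1 by exists n.-1; lia.
subst n.
have hc : (1 <= c)%N by lia.
have e2 : (2 ^ c.+1 = 2 * 2 ^ c)%N by rewrite expnS.
have hD : Dg c = (2 ^ c - 1)%N by rewrite /Dg subn1.
case: (ltngtP k (2 ^ c.+1)) hk2 => // hk _; last first.
  by rewrite hk stir_top /v2 eqxx.
have := odd_double_half k; rewrite -mul2n.
case hodd: (odd k) => /= e.
- set s := k./2 in e.
  have hs : (s <= Dg c)%N by rewrite hD; lia.
  have -> : k = (2 * s).+1 by lia.
  have [n1 v1] := stir_even hs.
  have [n2 v2'] := stir_odd hs.
  rewrite (v2E _ n1) (v2E _ n2) /= v1 v2'.
  lia.
- set s := k./2 in e.
  have hs0 : (1 <= s)%N by lia.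
  have hs : (s <= Dg c)%N by rewrite hD; lia.
  have hs' : (s.-1 <= Dg c)%N by lia.
  have -> : k = (2 * s.-1).+2 by lia.
  have -> : (2 * s.-1).+3 = (2 * s).+1 by lia.
  have [n1 v1] := stir_odd hs.
  have [n2 v2'] := stir_even hs'.
  rewrite (v2E _ n1) (v2E _ n2) /= v1 v2'.
  have := W_mono (leq_pred s) hs.
  have -> : (s - s.-1 = 1)%N by lia.
  lia.
Qed.
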